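(* Let $n$ be a positive integer and let $X,Y$ be two i.i.d. random vectors taking values in $[0,1]^n$. For every $\epsilon\in(0,1]$, $$\mathbb P\Big[\max_{i}|X_i-Y_i|\ge\epsilon\Big]\le1-\Big(\frac{\epsilon}{2}\Big)^n.$$ *)

(* Defs.v *)
From HB Require Import structures.
From mathcomp Require Import all_boot all_order all_algebra.
From mathcomp Require Import all_classical all_reals all_analysis.
Set Implicit Arguments. Unset Strict Implicit. Unset Printing Implicit Defensive.
Import Order.TTheory GRing.Theory Num.Theory.
Local Open Scope classical_set_scope.
Local Open Scope ring_scope.

Definition indep2 (d : measure_display) (T : measurableType d) (R : realType)
  (P : probability T R) (d1 d2 : measure_display)
  (T1 : measurableType d1) (T2 : measurableType d2)
  (X : T -> T1) (Y : T -> T2) : Prop :=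
  forall (A : set T1) (B : set T2), measurable A -> measurable B ->
    P (X @^-1` A `&` Y @^-1` B) = (P (X @^-1` A) * P (Y @^-1` B))%E.

Definition same_law (d : measure_display) (T : measurableType d) (R : realType)
  (P : probability T R) (d1 : measure_display) (T1 : measurableType d1)
  (X Y : T -> T1) : Prop :=
  forall A : set T1, measurable A -> P (X @^-1` A) = P (Y @^-1` A).

(* Main.v *)
Require Import Defs.
From HB Require Import structures.
From mathcomp Require Import all_boot all_order all_algebra.
From mathcomp Require Import all_classical all_reals all_analysis.
From mathcomp Require Import ring lra.
Import Order.TTheory GRing.Theory Num.Theory.
Local Open Scope classical_set_scope.
Local Open Scope ring_scope.


Lemma cs_ineq {R : realFieldType} {N : nat} {p : 'I_N -> R} :
  (0 < N)%N -> \sum_m p m = 1 -> N%:R^-1 <= \sum_m p m ^+ 2.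
Proof.
move=> N0 s1.
have NR : (0 : R) < N%:R by rewrite ltr0n.
have h : 0 <= \sum_m (p m - N%:R^-1) ^+ 2 by apply: sumr_ge0 => m _; exact: sqr_ge0.
have e : \sum_m (p m - N%:R^-1) ^+ 2 =
    \sum_m p m ^+ 2 - 2 * N%:R^-1 * \sum_m p m + N%:R * (N%:R^-1 ^+ 2).
  rewrite (eq_bigr (fun m => p m ^+ 2 - 2 * N%:R^-1 * p m + N%:R^-1 ^+ 2)); last first.
    by move=> m _; rewrite sqrrB; ring.
  rewrite big_split /= sumrB sumr_const card_ord -mulr_sumr mulr_natl.
  by rewrite mulr_natl.
rewrite e s1 mulr1 in h.
have : N%:R * N%:R^-1 ^+ 2 = N%:R^-1 :> R.
  by rewrite expr2 mulrA divff ?mul1r // gt_eqF.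
move=> q; rewrite q in h; lra.
Qed.

Section cells.
Variable R : realType.
Variable k : nat.
Hypothesis k0 : (0 < k)%N.

Definition cellI (j : 'I_k) : set R :=
  if j.+1 == k then [set` `[j%:R / k%:R, 1]] else [set` `[j%:R / k%:R, j.+1%:R / k%:R[].

Lemma cellI_meas j : measurable (cellI j).
Proof. by rewrite /cellI; case: ifP => _; exact: measurable_itv. Qed.

Lemma kR0 : (0 : R) < k%:R. Proof. by rewrite ltr0n. Qed.

Lemma cellI_bnd j x : cellI j x -> j%:R / k%:R <= x <= j.+1%:R / k%:R.
Proof.
rewrite /cellI; case: ifP => /eqP hj /=; rewrite in_itv /= => /andP[-> h] /=.
  by rewrite hj divff ?gt_eqF ?kR0.
exact: ltW.
Qed.

Lemma cellI_diam j x y : cellI j x -> cellI j y -> `|x - y| <= k%:R^-1.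
Proof.
move=> /cellI_bnd /andP[h1 h2] /cellI_bnd /andP[h3 h4].
have e : j.+1%:R / k%:R = j%:R / k%:R + k%:R^-1 :> R.
  by rewrite -natr1 mulrDl mul1r.
rewrite e in h2 h4.
rewrite ler_norml; apply/andP; split; lra.
Qed.

Lemma cellI_disj j j' x : cellI j x -> cellI j' x -> j = j'.
Proof.
wlog: j j' / (j <= j')%N.
  move=> W h h'; case: (leqP j j') => c; first exact: W.
  by apply/esym/W => //; exact: ltnW.
move=> le h h'; apply/val_inj/eqP; rewrite eqn_leq le /=; rewrite leqNgt; apply/negP => lt.
move: h h'; rewrite /cellI.
have -> : (j.+1 == k) = false.
  by apply/negbTE; rewrite neq_ltn (leq_ltn_trans lt (ltn_ord j')).
case: ifP => _ /=; rewrite !in_itv /= => /andP[h1 h2] /andP[h3 h4].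
- have : j.+1%:R / k%:R <= j'%:R / k%:R :> R.
    by rewrite ler_pM2r ?invr_gt0 ?kR0 // ler_nat.
  lra.
- have : j.+1%:R / k%:R <= j'%:R / k%:R :> R.
    by rewrite ler_pM2r ?invr_gt0 ?kR0 // ler_nat.
  lra.
Qed.

Lemma cell_lt (x : R) : (minn (Num.truncn (k%:R * x)) k.-1 < k)%N.
Proof. by rewrite gtn_min prednK // leqnn orbT. Qed.

Definition cell (x : R) : 'I_k := Ordinal (cell_lt x).

Lemma cellP x : 0 <= x <= 1 -> cellI (cell x) x.
Proof.
case/andP => x0 x1.
have kx0 : 0 <= k%:R * x by rewrite mulr_ge0 // ler0n.
rewrite /cell /cellI /=.
have := truncn_itv kx0; set c := Num.truncn _ => /andP[c1 c2].
have kR := kR0.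
case: (leqP k.-1 c) => hc.
- rewrite prednK // eqxx /= in_itv /= x1 andbT.
  rewrite ler_pdivrMr // mulrC.
  by apply: le_trans c1; rewrite ler_nat.
- 
  have -> : (c.+1 == k) = false by apply/negbTE/eqP => e; rewrite -e /= ltnn in hc.
  rewrite /= in_itv /= ler_pdivrMr // ltr_pdivlMr // ![x * _]mulrC c1 /=.
  done.
Qed.
End cells.
Arguments cellI {R k} j _.
Arguments cellI_meas {R k} j.
Arguments cellI_disj {R k} k0 {j j' x}.
Arguments cellI_diam {R k} k0 {j x y}.
Arguments cell {R k} k0 x.
Arguments cellP {R k} k0 {x}.

Lemma bigU_memP (T : Type) (I : eqType) (s : seq I) (F : I -> set T) t :
  (\big[setU/set0]_(i <- s) F i) t <-> exists2 i, i \in s & F i t.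
Proof.
elim: s => [|a s IH]; first by rewrite big_nil; split => // -[].
rewrite big_cons; split.
  case => [h|/IH [i hi hF]]; first by exists a => //; rewrite mem_head.
  by exists i => //; rewrite in_cons hi orbT.
move=> [i]; rewrite in_cons => /orP[/eqP -> h|hi hF]; first by left.
by right; apply/IH; exists i.
Qed.

Lemma meas_bigmax (R : realType) d (T : measurableType d) (I : Type) (s : seq I)
  (h : I -> T -> R) : (forall i, measurable_fun setT (h i)) ->
  measurable_fun setT (fun t => \big[Num.max/0]_(i <- s) h i t).
Proof.
move=> mh; elim: s => [|a s IH].
  under eq_fun do rewrite big_nil. exact: measurable_cst.
under eq_fun do rewrite big_cons.
exact: measurable_realfun.measurable_maxr.
Qed.

Theorem lemma9 (R : realType) (d : measure_display) (T : measurableType d)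
  (P : probability T R) (n : nat) (hn : (0 < n)%N)
  (X Y : T -> n.-tuple R)
  (mX : measurable_fun setT X) (mY : measurable_fun setT Y)
  (hXY : indep2 P X Y) (hlaw : same_law P X Y)
  (hX01 : forall t (i : 'I_n), 0 <= tnth (X t) i <= 1)
  (hY01 : forall t (i : 'I_n), 0 <= tnth (Y t) i <= 1)
  (eps : R) (heps0 : 0 < eps) (heps1 : eps <= 1) :
  (P [set t | (eps <= \big[Num.max/0]_(i < n) `|tnth (X t) i - tnth (Y t) i|)%R ]
    <= (1 - (eps / 2) ^+ n)%:E)%E.
Proof.
set k := Num.truncn (2 / eps).
have e2 : 0 <= 2 / eps by rewrite divr_ge0 // ltW.
have := truncn_itv e2; rewrite -/k => /andP[k1 k2].
have ie : 1 <= eps^-1 by rewrite invf_ge1.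
have k0 : (0 < k)%N.
  rewrite /k truncn_ge_nat //; lra.
have kR : (0 : R) < k%:R by rewrite ltr0n.
have keps : k%:R^-1 < eps.
  rewrite -(mul1r k%:R^-1) ltr_pdivrMr //.
  move: k2; rewrite ltr_pdivrMr // -natr1 => k2; nra.
have kle : (eps / 2) ^+ n <= (k ^ n)%:R^-1.
  have h : eps / 2 <= k%:R^-1.
    rewrite -[k%:R^-1]mul1r ler_pdivlMr //.
    move: k1; rewrite ler_pdivlMr //; nra.
  rewrite natrX -exprVn; apply: lerXn2r => //; rewrite ?nnegrE ?invr_ge0 ?ler0n ?divr_ge0 ?ltW //.
pose J := {ffun 'I_n -> 'I_k}.
pose C (f : J) : set (n.-tuple R) :=
  \bigcap_(i in [set: 'I_n]) ((fun v => tnth v i) @^-1` cellI (f i)).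
have mC f : measurable (C f).
  apply: fin_bigcap_measurable; first exact: finite_finset.
  move=> i _; have := measurable_tnth i measurableT (@cellI_meas R k (f i)).
  by rewrite setTI.
have disjC f g v : C f v -> C g v -> f = g.
  move=> hf hg; apply/ffunP => i; exact: (cellI_disj k0 (hf i I) (hg i I)).
have diamC f v w : C f v -> C f w -> forall i, `|tnth v i - tnth w i| <= k%:R^-1.
  move=> hv hw i; exact: (cellI_diam k0 (hv i I) (hw i I)).
have coverC v : (forall i, 0 <= tnth v i <= 1) -> C [ffun i => cell k0 (tnth v i)] v.
  by move=> hv i _ /=; rewrite ffunE; exact: cellP.
pose N := #|J|.
pose A (m : 'I_N) := X @^-1` C (enum_val m).
pose B (m : 'I_N) := Y @^-1` C (enum_val m).
pose U m := A m `&` B m.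
have mA m : measurable (A m) by have := mX measurableT _ (mC (enum_val m)); rewrite setTI.
have mB m : measurable (B m) by have := mY measurableT _ (mC (enum_val m)); rewrite setTI.
have mU m : measurable (U m) by exact: measurableI.
have trA : trivIset setT A.
  move=> i j _ _ [t [hi hj]]; apply: enum_val_inj; exact: disjC hi hj.
have trU : trivIset setT U.
  move=> i j _ _ [t [[hi _] [hj _]]]; apply: enum_val_inj; exact: disjC hi hj.
have covA : \big[setU/set0]_(m < N) A m = setT.
  apply/seteqP; split => // t _; apply/bigU_memP.
  exists (enum_rank [ffun i => cell k0 (tnth (X t) i)]); first exact: mem_index_enum.
  by rewrite /A /= enum_rankK; exact: coverC.
have sumA : \sum_(m < N) P (A m) = 1%E.
  rewrite -measure_semi_additive_ord //; last exact: bigsetU_measurable.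
  by rewrite covA; exact: probability_setT.
pose p m := fine (P (A m)).
have pE m : P (A m) = (p m)%:E by rewrite /p fineK // fin_num_measure.
have PU m : P (U m) = (p m ^+ 2)%:E.
  rewrite /U hXY ?mC // -hlaw ?mC // pE -EFinM expr2 //.
have sump : \sum_(m < N) p m = 1.
  by apply: EFin_inj; rewrite -sumEFin; under eq_bigr do rewrite -pE.
have NE : N = (k ^ n)%N by rewrite /N card_ffun !card_ord.
have N0 : (0 < N)%N by rewrite NE expn_gt0 k0.
have cs := cs_ineq N0 sump.
pose g t := \big[Num.max/0]_(i < n) `|tnth (X t) i - tnth (Y t) i|.
have mg : measurable_fun setT g.
  apply: meas_bigmax => i.
  apply: (measurableT_comp (@measurable_realfun.normr_measurable R setT)).
  apply: measurable_realfun.measurable_funB.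
    exact: (measurableT_comp (measurable_tnth i) mX).
  exact: (measurableT_comp (measurable_tnth i) mY).
set E := [set t | _].
have mE : measurable E.
  have := mg measurableT _ (@measurable_itv R `[eps, +oo[); rewrite setTI.
  suff -> : E = g @^-1` [set` `[eps, +oo[] by [].
  by apply/seteqP; split => t /=; rewrite in_itv /= andbT.
have mbU : measurable (\big[setU/set0]_(m < N) U m) by exact: bigsetU_measurable.
have sub : E `<=` ~` \big[setU/set0]_(m < N) U m.
  move=> t Et /bigU_memP [m _ [hA hB]].
  have : g t < eps.
    apply: bigmax_lt => // i _.
    exact: le_lt_trans (diamC _ _ _ hA hB i) keps.
  by rewrite ltNge Et.
have hle : (P E <= P (~` \big[setU/set0]_(m < N) U m))%E.
  apply: le_measure => //; rewrite inE; [exact: mE | exact: measurableC].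
apply: (le_trans hle).
have -> : P (~` \big[setU/set0]_(m < N) U m) = (1 - P (\big[setU/set0]_(m < N) U m))%E.
  exact: probability_setC.
have -> : P (\big[setU/set0]_(m < N) U m) = \sum_(m < N) P (U m).
  exact: measure_semi_additive_ord.
under eq_bigr do rewrite PU.
rewrite sumEFin -EFinB lee_fin lerD2l lerN2.
apply: le_trans cs; by rewrite NE.
Qed.
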